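(* For every integer $k\geq 1$, the following identity of formal power series in $q$ holds: \[ (q;q)_{\infty}\sum_{i=0}^{\infty}\frac{q^{i}}{(q;q)_i^{k+1}}=\sum_{i_1=0}^{\infty}\cdots\sum_{i_k=0}^{\infty}\frac{q^{\sum_{j=1}^k (i_j+i_j^2)+\sum_{s=2}^k \sum_{j=s}^k i_{s-1}i_j}}{\prod_{j=1}^k (q;q)_{i_j}\,(q;q)_{\sum_{s=1}^j i_s}}. \]
   Context: Notation: $(a;q)_n=\prod_{j=0}^{n-1}(1-aq^j)$ (so $(q;q)_0=1$) and $(q;q)_\infty=\prod_{j\ge 1}(1-q^j)$. *)

(* Defs.v *)
From mathcomp Require Import all_boot all_order all_algebra.
Set Implicit Arguments. Unset Strict Implicit. Unset Printing Implicit Defensive.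
Import Order.TTheory GRing.Theory Num.Theory.
Local Open Scope ring_scope.

Definition fps := nat -> rat.

Definition fps_one : fps := fun n => if n == 0%N then 1 else 0.
Definition fps_Xn (m : nat) : fps := fun n => if n == m then 1 else 0.
Definition fps_sub (f g : fps) : fps := fun n => f n - g n.
Definition fps_mul (f g : fps) : fps :=
  fun n => \sum_(i < n.+1) f i * g (n - i)%N.
Fixpoint fps_pow (f : fps) (e : nat) : fps :=
  match e with 0%N => fps_one | e'.+1 => fps_mul (fps_pow f e') f end.

(* Multiplicative inverse of a series with nonzero constant term:
   g 0 = 1/f 0,  g n = -(1/f 0) * \sum_(1 <= i <= n) f i * g (n - i). *)
Fixpoint fps_inv_seq (f : fps) (n : nat) : seq rat :=
  match n with
  | 0%N => [:: (f 0%N)^-1]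
  | n'.+1 => let s := fps_inv_seq f n' in
      rcons s (- (f 0%N)^-1 * \sum_(1 <= i < n'.+2) f i * nth 0 s (n'.+1 - i)%N)
  end.
Definition fps_inv (f : fps) : fps := fun n => nth 0 (fps_inv_seq f n) n.

Definition fps_prod (s : seq fps) : fps := foldr fps_mul fps_one s.

Definition qpoch (i : nat) : fps :=
  fps_prod [seq fps_sub fps_one (fps_Xn j.+1) | j <- iota 0 i].

(* Convergence in the (q-adic) topology of formal power series:
   every coefficient is eventually constant, equal to that of L. *)
Definition fps_lim (u : nat -> fps) (L : fps) : Prop :=
  forall n, exists M, forall m, (M <= m)%N -> u m n = L n.

Definition lhs_term (k i : nat) : fps :=
  fps_mul (fps_Xn i) (fps_inv (fps_pow (qpoch i) k.+1)).

(* summand of the right-hand k-fold series; the indices i_1..i_k are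
   given by a function i : nat -> nat (only i 1, ..., i k are used). *)
Definition rhs_exp (k : nat) (i : nat -> nat) : nat :=
  (\sum_(1 <= j < k.+1) (i j + i j ^ 2)
   + \sum_(2 <= s < k.+1) \sum_(s <= j < k.+1) i s.-1 * i j)%N.

Definition rhs_term (k : nat) (i : nat -> nat) : fps :=
  fps_mul (fps_Xn (rhs_exp k i))
    (fps_inv (fps_prod [seq fps_mul (qpoch (i j)) (qpoch (\sum_(1 <= s < j.+1) i s)%N)
                       | j <- iota 1 k])).

(* a tuple (t_0,...,t_{k-1}) in [0,m)^k viewed as the 1-based index i_j = t_{j-1} *)
Definition of_ffun (k m : nat) (t : {ffun 'I_k -> 'I_m}) : nat -> nat :=
  fun j => nth 0%N [seq val (t x) | x <- enum 'I_k] j.-1.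

(* Main.v *)
From HB Require Import structures.
Require Import Defs.
From mathcomp Require Import all_boot all_order all_algebra.
From mathcomp Require Import boolp zify ring.
Set Implicit Arguments. Unset Strict Implicit. Unset Printing Implicit Defensive.
Import Order.TTheory GRing.Theory Num.Theory.
Local Open Scope ring_scope.

Definition F : Type := nat -> rat.
HB.instance Definition _ := gen_eqMixin F.
HB.instance Definition _ := gen_choiceMixin F.

Definition fzero : F := fun _ => 0.
Definition fopp (f : F) : F := fun n => - f n.
Definition fadd (f g : F) : F := fun n => f n + g n.

Lemma faddA : associative fadd.
Proof. by move=> f g h; apply: funext => n; rewrite /fadd addrA. Qed.
Lemma faddC : commutative fadd.
Proof. by move=> f g; apply: funext => n; rewrite /fadd addrC. Qed.
Lemma fadd0 : left_id fzero fadd.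
Proof. by move=> f; apply: funext => n; rewrite /fadd /fzero add0r. Qed.
Lemma faddN : left_inverse fzero fopp fadd.
Proof. by move=> f; apply: funext => n; rewrite /fadd /fzero /fopp addNr. Qed.

HB.instance Definition _ := GRing.isZmodule.Build F faddA faddC fadd0 faddN.

Lemma addFE (f g : F) n : (f + g) n = f n + g n. Proof. by []. Qed.
Lemma oppFE (f : F) n : (- f) n = - f n. Proof. by []. Qed.
Lemma zeroFE n : (0 : F) n = 0. Proof. by []. Qed.
Lemma sumFE I (r : seq I) (P : pred I) (G : I -> F) n :
  (\sum_(i <- r | P i) G i) n = \sum_(i <- r | P i) G i n.
Proof.
elim: r => [|x r IH]; first by rewrite !big_nil.
by rewrite !big_cons; case: (P x); rewrite ?addFE IH.
Qed.

Lemma tri (V : nmodType) n (G : nat -> nat -> V) :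
  \sum_(i < n.+1) \sum_(j < i.+1) G j (i - j)%N =
  \sum_(j < n.+1) \sum_(l < (n - j).+1) G j l.
Proof.
elim: n => [|n IH]; first by rewrite big_ord1 big_ord1 /= big_ord1 big_ord1.
rewrite big_ord_recr /= IH [RHS]big_ord_recr /= subnn big_ord1.
rewrite [X in _ + X]big_ord_recr /= subnn addrA; congr (_ + _).
rewrite -big_split /=. apply: eq_bigr; move=> j _.
have hj : (j <= n)%N by rewrite -ltnS ltn_ord.
by rewrite (subSn hj) [RHS]big_ord_recr.
Qed.

Lemma fmulC : commutative (fps_mul : F -> F -> F).
Proof.
move=> f g; apply: funext => n; rewrite /fps_mul.
rewrite (reindex_inj rev_ord_inj) /=; apply: eq_bigr => i _.
rewrite subSS mulrC; congr (_ * _); congr g.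
by rewrite subKn // -ltnS ltn_ord.
Qed.

Lemma fmulA : associative (fps_mul : F -> F -> F).
Proof.
move=> f g h; apply: funext => n; rewrite /fps_mul /=; symmetry.
transitivity (\sum_(i < n.+1) \sum_(j < i.+1) f j * g (i - j)%N * h (n - j - (i - j))%N).
  apply: eq_bigr => i _; rewrite mulr_suml; apply: eq_bigr => j _.
  have hj := ltn_ord j; have hi := ltn_ord i.
  have -> : (n - j - (i - j) = n - i)%N by lia.
  by [].
rewrite (tri _ (fun j l => f j * g l * h (n - j - l)%N)).
by apply: eq_bigr => j _; rewrite mulr_sumr; apply: eq_bigr => l _; rewrite mulrA.
Qed.

Lemma fmul1 : left_id (fps_one : F) (fps_mul : F -> F -> F).
Proof.
move=> f; apply: funext => n; rewrite /fps_mul big_ord_recl /= /fps_one eqxx mul1r subn0.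
rewrite big1 ?addr0 // => i _; by rewrite /= mul0r.
Qed.

Lemma fmulDl : left_distributive (fps_mul : F -> F -> F) +%R.
Proof.
move=> f g h; apply: funext => n; rewrite /fps_mul /= addFE -big_split /=.
by apply: eq_bigr => i _; rewrite addFE mulrDl.
Qed.

Lemma fone_neq0 : (fps_one : F) != 0.
Proof.
apply/eqP => /(congr1 (fun f : F => f 0%N)); rewrite /fps_one /=.
by move/eqP; rewrite oner_eq0.
Qed.

HB.instance Definition _ := GRing.Zmodule_isComNzRing.Build F fmulA fmulC fmul1 fmulDl fone_neq0.

Lemma mulFE (f g : F) : f * g = fps_mul f g. Proof. by []. Qed.
Lemma oneFE : (1 : F) = fps_one. Proof. by []. Qed.

Lemma size_inv_seq (f : F) n : size (fps_inv_seq f n) = n.+1.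
Proof. by elim: n => [|n IH] //=; rewrite size_rcons IH. Qed.

Lemma inv_seq_nth (f : F) n j : (j <= n)%N -> nth 0 (fps_inv_seq f n) j = fps_inv f j.
Proof.
elim: n => [|n IH]; first by rewrite leqn0 => /eqP ->.
rewrite leq_eqVlt => /orP [/eqP -> //|hj].
by rewrite /= nth_rcons size_inv_seq hj IH.
Qed.

Lemma fps_inv0 (f : F) : fps_inv f 0 = (f 0%N)^-1.
Proof. by []. Qed.

Lemma fps_invS (f : F) n : fps_inv f n.+1 =
  - (f 0%N)^-1 * \sum_(i < n.+1) f i.+1 * fps_inv f (n - i)%N.
Proof.
rewrite {1}/fps_inv /= nth_rcons size_inv_seq ltnn eqxx.
rewrite big_add1 /= big_mkord; congr (_ * _); apply: eq_bigr => i _.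
by rewrite subSS inv_seq_nth // leq_subr.
Qed.

Lemma fps_mulV (f : F) : f 0%N != 0 -> fps_mul f (fps_inv f) = fps_one.
Proof.
move=> h0; apply: funext => n; case: n => [|n].
  by rewrite /fps_mul big_ord1 /= fps_inv0 mulfV.
rewrite /fps_mul big_ord_recl /= subn0 fps_invS mulrA mulrN mulfV // mulN1r.
rewrite /fps_one /=; apply/eqP; rewrite addrC subr_eq0; apply/eqP.
by apply: eq_bigr => i _; rewrite /bump /= add1n subSS.
Qed.

Definition unitF : {pred F} := [pred f : F | f 0%N != 0].
Definition invF (f : F) : F := if f 0%N != 0 then fps_inv f else f.

Lemma mulVF : {in unitF, left_inverse 1 invF *%R}.
Proof.
move=> f hf; rewrite /invF; rewrite inE /= in hf; rewrite hf mulrC.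
exact: fps_mulV.
Qed.

Lemma unitPlF : forall x y : F, y * x = 1 -> unitF x.
Proof.
move=> x y /(congr1 (fun f : F => f 0%N)); rewrite mulFE /fps_mul big_ord1 /= /fps_one /=.
by rewrite subnn => h; apply/eqP => hx; move: h; rewrite hx mulr0 oneFE /fps_one /= => /eqP; rewrite eq_sym oner_eq0.
Qed.

Lemma invr_outF : {in [predC unitF], invF =1 id}.
Proof. by move=> f; rewrite inE /= inE /= /invF => /negbTE ->. Qed.

HB.instance Definition _ := GRing.ComNzRing_hasMulInverse.Build F mulVF unitPlF invr_outF.

Lemma unitFE (f : F) : (f \is a GRing.unit) = (f 0%N != 0).
Proof. by []. Qed.
Lemma invFE (f : F) : f 0%N != 0 -> f^-1 = fps_inv f.
Proof. by move=> h; rewrite /GRing.inv /= /invF h. Qed.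

Notation X := (fps_Xn : nat -> F).

Lemma coefXM e (f : F) n : (X e * f) n = if (e <= n)%N then f (n - e)%N else 0.
Proof.
rewrite mulFE /fps_mul; case: leqP => he.
  have he' : (e < n.+1)%N by [].
  rewrite (bigD1 (Ordinal he')) //= /fps_Xn eqxx mul1r big1 ?addr0 // => i hi.
  rewrite ifF ?mul0r //; apply/negbTE; apply: contra hi => /eqP hie.
  by apply/eqP; apply: val_inj => /=; rewrite hie.
rewrite big1 // => i _; rewrite /fps_Xn ifF ?mul0r //; apply/negbTE.
by rewrite neq_ltn (leq_trans (ltn_ord i)).
Qed.

Lemma XD a b : X a * X b = X (a + b).
Proof.
apply: funext => n; rewrite coefXM /fps_Xn; case: leqP => h.
  by congr (if _ then _ else _); apply/eqP/eqP; lia.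
by rewrite ifF //; apply/eqP; lia.
Qed.

Lemma X0 : X 0 = 1.
Proof. by []. Qed.

Lemma X_unit e : (1 - X e.+1) \is a GRing.unit.
Proof. by rewrite unitFE addFE oppFE oneFE /fps_one /fps_Xn /=. Qed.

Lemma prodE (s : seq F) : fps_prod s = \prod_(x <- s) x.
Proof. by elim: s => [|x s IH]; rewrite ?big_nil ?big_cons //= IH. Qed.

Lemma powE (f : F) e : fps_pow f e = f ^+ e.
Proof. by elim: e => [|e IH] //=; rewrite IH exprSr. Qed.

Definition qp (i : nat) : F := qpoch i.

Lemma qpE i : qp i = \prod_(j < i) (1 - X j.+1).
Proof. by rewrite /qp /qpoch prodE big_map -(big_mkord xpredT (fun j => 1 - X j.+1)) /index_iota subn0. Qed.

Lemma qpS i : qp i.+1 = qp i * (1 - X i.+1).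
Proof. by rewrite !qpE big_ord_recr. Qed.

Lemma qp0 : qp 0 = 1.
Proof. by rewrite qpE big_ord0. Qed.

Lemma qp_unit i : qp i \is a GRing.unit.
Proof. by rewrite qpE; apply: unitr_prod => j _; apply: X_unit. Qed.

Definition I (i : nat) : F := (qp i)^-1.

Lemma I0 : I 0 = 1.
Proof. by rewrite /I qp0 invr1. Qed.

Lemma IS i : I i.+1 * (1 - X i.+1) = I i.
Proof. by rewrite /I qpS invrM ?qp_unit ?X_unit // mulrAC mulVr ?X_unit ?mul1r. Qed.

Lemma tele L : \sum_(m < L.+1) X m * I m = I L.
Proof.
elim: L => [|L IH]; first by rewrite big_ord1 X0 mul1r.
rewrite big_ord_recr /= IH -IS; ring.
Qed.

Definition Sd n a := \sum_(m < n.+1) X (m * m + a * m)%N * I m * I (a + m)%N * I (n - m)%N.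

Lemma Sd_step n a : Sd n.+1 a * (1 - X n.+1) = Sd n a.+1.
Proof.
rewrite /Sd mulr_suml.
transitivity (\sum_(m < n.+2) (X (m * m + a * m)%N * I m * I (a + m)%N * I (n.+1 - m)%N * (1 - X m)
   + X (m * m + a * m)%N * I m * I (a + m)%N * I (n.+1 - m)%N * (X m * (1 - X (n.+1 - m)%N)))).
  apply: eq_bigr => m _; have hm := ltn_ord m.
  have -> : X n.+1 = X m * X (n.+1 - m)%N by rewrite XD; congr X; lia.
  ring.
rewrite big_split /= big_ord_recl [X in _ + X]big_ord_recr /= subnn X0 !subrr !mulr0 add0r addr0.
rewrite -big_split /=; apply: eq_bigr => i _.
have hi : (i <= n)%N by rewrite -ltnS ltn_ord.
rewrite /bump /= add1n subSS (subSn hi) addnS addSn.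
have e1 : X (i.+1 * i.+1 + a * i.+1)%N = X (i * i + a * i)%N * X i * X (a + i)%N.+1.
  by rewrite !XD; congr X; lia.
have e2 : X (i * i + a.+1 * i)%N = X (i * i + a * i)%N * X i by rewrite XD; congr X; lia.
rewrite e1 e2 -(IS i) -(IS (a + i)%N) -(IS (n - i)%N).
ring.
Qed.

Lemma Sd_eq n a : Sd n a = I n * I (n + a)%N.
Proof.
elim: n a => [|n IH] a.
  by rewrite /Sd big_ord1 /= !muln0 !addn0 subnn X0 I0 add0n !mul1r mulr1.
apply: (mulIr (X_unit n)); rewrite Sd_step IH addSnnS -(IS n) addnS; ring.
Qed.

Definition eqm n (f g : F) := forall j, (j <= n)%N -> f j = g j.

Lemma eqm_refl n f : eqm n f f. Proof. by []. Qed.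
Lemma eqm_sym n f g : eqm n f g -> eqm n g f.
Proof. by move=> h j hj; rewrite h. Qed.
Lemma eqm_trans n f g h : eqm n f g -> eqm n g h -> eqm n f h.
Proof. by move=> h1 h2 j hj; rewrite h1 ?h2. Qed.
Lemma eqm_add n f f' g g' : eqm n f f' -> eqm n g g' -> eqm n (f + g) (f' + g').
Proof. by move=> h1 h2 j hj; rewrite !addFE h1 ?h2. Qed.
Lemma eqm_sum n (J : Type) (r : seq J) (P : pred J) (A B : J -> F) :
  (forall i, P i -> eqm n (A i) (B i)) ->
  eqm n (\sum_(i <- r | P i) A i) (\sum_(i <- r | P i) B i).
Proof.
move=> h j hj; rewrite !sumFE; apply: eq_bigr => i hi; exact: h.
Qed.
Lemma eqm_mul n f f' g g' : eqm n f f' -> eqm n g g' -> eqm n (f * g) (f' * g').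
Proof.
move=> h1 h2 j hj; rewrite !mulFE /fps_mul; apply: eq_bigr => i _.
have hi := ltn_ord i.
rewrite h1 ?h2 //; [exact: leq_trans (leq_subr _ _) hj | lia].
Qed.
Lemma eqm_mulX n e f : (n < e)%N -> eqm n (X e * f) 0.
Proof.
move=> he j hj; rewrite coefXM zeroFE ifF //; apply/negbTE; rewrite -ltnNge.
exact: leq_ltn_trans hj he.
Qed.

Lemma sum_trunc n b m (f : nat -> F) : (b <= m)%N ->
  (forall x, (b <= x)%N -> (x < m)%N -> eqm n (f x) 0) ->
  eqm n (\sum_(x < m) f x) (\sum_(x < b) f x).
Proof.
move=> hb h.
rewrite -(big_mkord xpredT f) -(big_mkord xpredT f) (big_cat_nat (n:=b)) //=.
rewrite -[X in eqm _ _ X]addr0; apply: eqm_add; first exact: eqm_refl.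
rewrite big_seq.
apply: (eqm_trans (g := \sum_(x <- index_iota b m | x \in index_iota b m) (0 : F))).
  apply: eqm_sum => x; rewrite mem_index_iota => /andP [h1 h2]; exact: h.
by rewrite big1.
Qed.

Definition shift (x : nat) (i : nat -> nat) : nat -> nat :=
  fun j => if (j <= 1)%N then x else i j.-1.

Fixpoint NS (k m : nat) (g : (nat -> nat) -> F) : F :=
  match k with
  | 0%N => g (fun _ => 0%N)
  | k'.+1 => \sum_(x < m) NS k' m (fun i => g (shift x i))
  end.

Definition fcons k m (p : 'I_m * {ffun 'I_k -> 'I_m}) : {ffun 'I_k.+1 -> 'I_m} :=
  [ffun j => if unlift ord0 j is Some j' then p.2 j' else p.1].
Definition fdecons k m (t : {ffun 'I_k.+1 -> 'I_m}) : 'I_m * {ffun 'I_k -> 'I_m} :=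
  (t ord0, [ffun j => t (lift ord0 j)]).

Lemma fcons_bij k m : bijective (@fcons k m).
Proof.
exists (@fdecons k m).
  move=> [x t]; rewrite /fdecons /fcons /= !ffunE unlift_none; congr pair.
  by apply/ffunP => j; rewrite !ffunE liftK.
move=> t; apply/ffunP => j; rewrite /fcons /fdecons ffunE /=.
case: unliftP => [j'|] -> /=; by rewrite ?ffunE.
Qed.

Lemma of_ffun_cons k m x (t : {ffun 'I_k -> 'I_m}) :
  of_ffun (fcons (x, t)) = shift x (of_ffun t).
Proof.
apply: funext => j; rewrite /of_ffun /shift enum_ordSl /= -map_comp.
rewrite /fcons ffunE unlift_none /=.
have -> : [seq val (t y) | y <- enum 'I_k] = map (val \o ([ffun j0 => if unlift ord0 j0 is Some j' then (x, t).2 j' else (x, t).1] \o lift ord0)) (enum 'I_k).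
  by apply: eq_map => y /=; rewrite ffunE liftK.
by case: j => [|[|j]].
Qed.

Lemma box_NS k m (g : (nat -> nat) -> F) :
  \sum_(t : {ffun 'I_k -> 'I_m}) g (of_ffun t) = NS k m g.
Proof.
elim: k g => [|k IH] g /=.
  have h0 : forall t : {ffun 'I_0 -> 'I_m}, of_ffun t = (fun _ => 0%N).
    by move=> t; apply: funext => j; rewrite /of_ffun enum_ord0 /= nth_nil.
  rewrite (eq_bigr (fun _ => g (fun _ => 0%N))) ?sumr_const; last by move=> t _; rewrite h0.
  by rewrite card_ffun !card_ord expn0.
rewrite (reindex (@fcons k m)) /=; last by apply: onW_bij; apply: fcons_bij.
rewrite -(pair_big xpredT xpredT (fun x t => g (of_ffun (fcons (x, t))))) /=.
apply: eq_bigr => x _; rewrite -IH; apply: eq_bigr => t _.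
by rewrite of_ffun_cons.
Qed.

Definition Ns (i : nat -> nat) (j : nat) : nat := (\sum_(1 <= s < j.+1) i s)%N.
Definition Ek k a (i : nat -> nat) : nat := (\sum_(1 <= j < k.+1) i j * (1 + a + Ns i j))%N.
Definition Pk k a (i : nat -> nat) : F :=
  fps_prod [seq fps_mul (qpoch (i j)) (qpoch (a + Ns i j)%N) | j <- iota 1 k].
Definition Gk k a (i : nat -> nat) : F := X (Ek k a i) * (Pk k a i)^-1.
Definition tl (i : nat -> nat) : nat -> nat := fun j => i j.+1.

Lemma Ns_tl i j : Ns i j.+1 = (i 1%N + Ns (tl i) j)%N.
Proof. by rewrite /Ns big_ltn // big_add1. Qed.

Lemma Ns1 i : Ns i 1 = i 1%N.
Proof. by rewrite /Ns big_nat1. Qed.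

Lemma Ek_S k a i : Ek k.+1 a i = (i 1%N * (1 + a + i 1%N) + Ek k (a + i 1%N) (tl i))%N.
Proof.
rewrite /Ek big_ltn // big_add1 Ns1; congr (_ + _)%N.
by apply: eq_bigr => j _; rewrite Ns_tl addnA.
Qed.

Lemma Pk_S k a i : Pk k.+1 a i = qp (i 1%N) * qp (a + i 1%N)%N * Pk k (a + i 1%N) (tl i).
Proof.
rewrite /Pk !prodE /= big_cons !big_map Ns1 mulFE; congr (_ * _).
rewrite -[2%N]/(1 + 1)%N iotaDl big_map; apply: eq_bigr => j _.
by rewrite /= Ns_tl addnA.
Qed.

Lemma Pk_unit k a i : Pk k a i \is a GRing.unit.
Proof.
rewrite /Pk prodE big_map; apply: unitr_prod => j _.
by rewrite -mulFE unitrM !qp_unit.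
Qed.

Lemma Gk0 a i : Gk 0 a i = 1.
Proof. by rewrite /Gk /Ek /Pk big_geq //= X0 mul1r oneFE -oneFE invr1. Qed.

Lemma Gk_S k a i : Gk k.+1 a i =
  X (i 1%N * (1 + a + i 1%N))%N * I (i 1%N) * I (a + i 1%N)%N * Gk k (a + i 1%N) (tl i).
Proof.
rewrite /Gk Ek_S Pk_S -XD !invrM ?qp_unit ?Pk_unit ?unitrM ?qp_unit // /I; ring.
Qed.

Lemma Gk_ext k a i i' : (forall j, (0 < j)%N -> i j = i' j) -> Gk k a i = Gk k a i'.
Proof.
elim: k a i i' => [|k IH] a i i' h; first by rewrite !Gk0.
rewrite !Gk_S -h //; congr (_ * _); apply: IH => j hj.
by rewrite /tl h.
Qed.

Lemma Gk_shift k a x i : Gk k.+1 a (shift x i) =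
  X (x * (1 + a + x))%N * I x * I (a + x)%N * Gk k (a + x) i.
Proof.
rewrite Gk_S; congr (_ * _); apply: Gk_ext => j hj.
by rewrite /tl /shift ifF //; apply/negbTE; rewrite -ltnNge ltnS.
Qed.

Lemma Gk_big n k a i j : (1 <= j <= k)%N -> (n < i j)%N -> eqm n (Gk k a i) 0.
Proof.
elim: k a i j => [|k IH] a i j; first by case/andP => h1 h2; move: (leq_trans h1 h2).
move=> /andP [h1 h2] hn; rewrite Gk_S.
case: (ltngtP j 1) => hj; first by move: h1; rewrite leqNgt hj.
  have hk : (1 <= j.-1 <= k)%N by apply/andP; split; lia.
  rewrite -(mulr0 (X (i 1%N * (1 + a + i 1%N))%N * I (i 1%N) * I (a + i 1%N)%N)).
  apply: eqm_mul; first exact: eqm_refl.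
  apply: (IH _ _ _ hk); rewrite /tl prednK //; lia.
rewrite -!mulrA; apply: eqm_mulX; subst j.
by apply: (leq_trans hn); rewrite leq_pmulr // addnC addn1.
Qed.

Definition Qs k (i : nat -> nat) : nat :=
  (\sum_(2 <= s < k.+1) \sum_(s <= j < k.+1) i s.-1 * i j)%N.

Lemma Qs_S k i : Qs k.+1 i = (Qs k i + i k.+1 * Ns i k)%N.
Proof.
rewrite /Qs.
transitivity (\sum_(2 <= s < k.+2) (\sum_(s <= j < k.+1) i s.-1 * i j + i s.-1 * i k.+1))%N.
  rewrite big_seq_cond [RHS]big_seq_cond; apply: eq_bigr => s.
  rewrite andbT mem_index_iota => /andP [h1 h2].
  by rewrite big_nat_recr.
rewrite big_split /=; congr (_ + _)%N.
  case: k => [|k]; first by rewrite !big_geq.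
  case: k => [|k]; first by rewrite big_nat1 !big_geq.
  by rewrite big_nat_recr //= (@big_geq _ _ _ k.+3 k.+3) // addn0.
by rewrite /Ns -[2%N]/(1.+1) big_add1 /= mulnC big_distrl.
Qed.

Lemma rhs_exp_E k i : rhs_exp k i = Ek k 0 i.
Proof.
rewrite /rhs_exp /Ek -/(Qs k i).
elim: k => [|k IH]; first by rewrite /Qs !big_geq.
have e1 : (\sum_(1 <= j < k.+2) (i j + i j ^ 2) =
   \sum_(1 <= j < k.+1) (i j + i j ^ 2) + (i k.+1 + i k.+1 ^ 2))%N by rewrite big_nat_recr.
have e2 : (\sum_(1 <= j < k.+2) i j * (1 + 0 + Ns i j) =
   \sum_(1 <= j < k.+1) i j * (1 + 0 + Ns i j) + i k.+1 * (1 + 0 + Ns i k.+1))%N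
  by rewrite big_nat_recr.
have e3 : Ns i k.+1 = (Ns i k + i k.+1)%N by rewrite /Ns big_nat_recr.
rewrite Qs_S e1 e2 -IH e3.
set A := (\sum_(1 <= j < k.+1) _)%N.
rewrite !mulnDr expnS expn1 !muln0 !muln1 !addn0.
lia.
Qed.

Lemma rhs_term_G k i : rhs_term k i = Gk k 0 i.
Proof.
rewrite /Gk -rhs_exp_E invFE; last by rewrite -unitFE Pk_unit.
by [].
Qed.

Lemma NS_scale k m c (g : (nat -> nat) -> F) :
  NS k m (fun i => c * g i) = c * NS k m g.
Proof.
elim: k g => [|k IH] g //=; rewrite mulr_sumr; apply: eq_bigr => x _.
exact: IH.
Qed.

Definition V k L a := \sum_(n < L.+1) X n * I n * I (n + a)%N ^+ k.

Lemma main_lemma k : forall a L, eqm L (NS k L.+1 (Gk k a)) (qp L * V k L a).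
Proof.
elim: k => [|k IH] a L.
  rewrite /= Gk0 /V.
  have -> : \sum_(n < L.+1) X n * I n * I (n + a)%N ^+ 0 = I L.
    by rewrite -tele; apply: eq_bigr => n _; rewrite expr0 mulr1.
  by rewrite /I mulrV ?qp_unit.
rewrite /=.
have hs : forall x : 'I_L.+1, (fun i => Gk k.+1 a (shift x i)) =
    (fun i => X (x * (1 + a + x))%N * I x * I (a + x)%N * Gk k (a + x) i).
  by move=> x; apply: funext => i; rewrite Gk_shift.
under eq_bigr => x _ do rewrite hs NS_scale.
apply: (@eqm_trans _ _ (\sum_(x < L.+1) X (x * (1 + a + x))%N * I x * I (a + x)%N * (qp L * V k L (a + x)))).
  apply: eqm_sum => x _; apply: eqm_mul; [exact: eqm_refl | exact: IH].
pose h x n := X (x * (1 + a + x))%N * I x * I (a + x)%N * (X n * I n * I (n + (a + x))%N ^+ k).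
have -> : \sum_(x < L.+1) X (x * (1 + a + x))%N * I x * I (a + x)%N * (qp L * V k L (a + x)) =
    qp L * \sum_(x < L.+1) \sum_(n < L.+1) h x n.
  rewrite mulr_sumr; apply: eq_bigr => x _; rewrite /V !mulr_sumr; apply: eq_bigr => n _.
  rewrite /h; ring.
apply: eqm_mul; first exact: eqm_refl.
apply: (@eqm_trans _ _ (\sum_(x < L.+1) \sum_(l < (L - x).+1) h x l)).
  apply: eqm_sum => x _; apply: sum_trunc; first by rewrite ltnS leq_subr.
  move=> l hl _.
  have -> : h x l = X (x * (1 + a + x) + l)%N * (I x * I (a + x)%N * (I l * I (l + (a + x))%N ^+ k)).
    by rewrite /h -XD; ring.
  apply: eqm_mulX; have hx := ltn_ord x.
  have : (x <= x * (1 + a + x))%N by rewrite leq_pmulr // addnC addn1.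
  lia.
rewrite -(tri _ h) /V; apply: eqm_sum => n _; rewrite exprSr.
suff -> : \sum_(j < n.+1) h j (n - j)%N = X n * I n * (I (n + a)%N ^+ k * I (n + a)%N) by [].
rewrite (_ : X n * I n * (I (n + a)%N ^+ k * I (n + a)%N) =
   X n * I (n + a)%N ^+ k * (I n * I (n + a)%N)); last by ring.
rewrite -Sd_eq /Sd mulr_sumr; apply: eq_bigr => x _.
have hx : (x <= n)%N by rewrite -ltnS ltn_ord.
rewrite /h.
have -> : (n - x + (a + x) = n + a)%N by lia.
have e : X (x * (1 + a + x))%N * X (n - x)%N = X n * X (x * x + a * x)%N by rewrite !XD; congr X; lia.
transitivity (X (x * (1 + a + x))%N * X (n - x)%N * I x * I (a + x)%N * I (n - x)%N * I (n + a)%N ^+ k).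
  ring.
rewrite e; ring.
Qed.


Lemma qp_stab n m : (n <= m)%N -> qp m n = qp n n.
Proof.
elim: m => [|m IH]; first by rewrite leqn0 => /eqP ->.
rewrite leq_eqVlt => /orP [/eqP -> //|hm].
rewrite qpS mulrBr mulr1 addFE oppFE mulrC coefXM ifF ?subr0 ?IH //.
by apply/negbTE; rewrite -ltnNge.
Qed.

Lemma lhs_termE k i : lhs_term k i = X i * I i ^+ k.+1.
Proof.
rewrite /lhs_term powE -mulFE -invFE; last by rewrite -unitFE unitrX ?qp_unit.
by rewrite /I exprVn.
Qed.

Lemma NS_zero n k m (g : (nat -> nat) -> F) :
  (forall i, eqm n (g i) 0) -> eqm n (NS k m g) 0.
Proof.
elim: k g => [|k IH] g h //=.
apply: (eqm_trans (g := \sum_(x < m) (0 : F))); last by rewrite big1_eq.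
by apply: eqm_sum => x _; apply: IH.
Qed.

Lemma NS_stab n k m (g : (nat -> nat) -> F) : (n < m)%N ->
  (forall i j, (1 <= j <= k)%N -> (n < i j)%N -> eqm n (g i) 0) ->
  eqm n (NS k m g) (NS k n.+1 g).
Proof.
move=> hm; elim: k g => [|k IH] g h; first exact: eqm_refl.
rewrite /=; apply: (eqm_trans (g := \sum_(x < n.+1) NS k m (fun i => g (shift x i)))).
  apply: (sum_trunc (f := fun x => NS k m (fun i => g (shift x i)))) => // x hx _; apply: NS_zero => i; apply: (h (shift x i) 1%N) => //.
apply: eqm_sum => x _; apply: IH => i j hj hij; apply: (h _ j.+1).
    by case/andP: hj => h1 h2; apply/andP; split.
  by rewrite /shift ifF //; apply/negbTE; rewrite -ltnNge ltnS; case/andP: hj.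
Qed.

Theorem mainTheorem4 (k : nat) (hk : (1 <= k)%N) :
  exists P S T : fps,
    (* P = (q;q)_oo, limit of the partial products (q;q)_m *)
    fps_lim (fun m => qpoch m) P /\
    (* S = sum_{i>=0} q^i / (q;q)_i^(k+1) *)
    fps_lim (fun m n => \sum_(i < m) lhs_term k i n) S /\
    (* T = the k-fold sum over i_1,...,i_k >= 0 (limit of box partial sums) *)
    fps_lim (fun m n => \sum_(t : {ffun 'I_k -> 'I_m}) rhs_term k (of_ffun t) n) T /\
    fps_mul P S = T.
Proof.
pose P : F := fun j => qp j j.
pose S : F := fun j => (\sum_(i < j.+1) (lhs_term k i : F)) j.
pose T : F := fun j => NS k j.+1 (Gk k 0) j.
have hG : forall i j, (1 <= j <= k)%N -> forall n, (n < i j)%N -> eqm n (Gk k 0 i) 0.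
  by move=> i j hj n hn; apply: Gk_big hj hn.
have hS : forall n m, (n < m)%N ->
    (\sum_(i < m) (lhs_term k i : F)) n = (\sum_(i < n.+1) (lhs_term k i : F)) n.
  move=> n m hm; apply: (sum_trunc (n := n)) => // x hx _.
  by rewrite lhs_termE; apply: eqm_mulX.
have hT : forall n m, (n < m)%N ->
    (\sum_(t : {ffun 'I_k -> 'I_m}) (rhs_term k (of_ffun t) : F)) n = T n.
  move=> n m hm; rewrite box_NS.
  have -> : rhs_term k = Gk k 0 by apply: funext => i; apply: rhs_term_G.
  apply: NS_stab => // i j hj hn; exact: hG hj _ hn.
exists P, S, T; split; [|split; [|split]].
- by move=> n; exists n => m hm; exact: qp_stab.
- move=> n; exists n.+1 => m hm; by rewrite -(sumFE _ _ (fun i : 'I_m => (lhs_term k i : F))) /S hS.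
- move=> n; exists n.+1 => m hm; by rewrite -(sumFE _ _ (fun t : {ffun 'I_k -> 'I_m} => (rhs_term k (of_ffun t) : F))) hT.
apply: funext => n; rewrite -mulFE.
have eP : eqm n P (qp n) by move=> j hj; rewrite /P qp_stab.
have eS : eqm n S (V k n 0).
  have -> : V k n 0 = \sum_(i < n.+1) (lhs_term k i : F).
    rewrite /V; apply: eq_bigr => i _; rewrite lhs_termE addn0 exprS; ring.
  by move=> j hj; rewrite /S (hS j n.+1).
rewrite (eqm_mul eP eS) //.
by rewrite -(@main_lemma k 0 n n) // /T.
Qed.
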